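(* Let $N$ be a finite set with $|N|\ge 2$ and let $\mathcal{D}\subseteq\mathrm{DAG}(N)$ be a facet of $P_N$ which does not contain the empty graph. Then $\mathcal{D}$ is closed under super-graphs: if $G\in\mathcal{D}$ is a subgraph of $H\in\mathrm{DAG}(N)$, then $H\in\mathcal{D}$. Moreover, for every $(a|B)\in\Upsilon$ there exists $G\in\mathcal{D}$ with $\mathrm{pa}_G(a)=B$.
   Context: $\mathrm{DAG}(N)$ is the set of acyclic directed graphs over $N$; $\mathrm{pa}_G(a)$ is the parent set of $a$ in $G$; the empty graph has no arrows. $\Upsilon=\{(a|B): a\in N,\ \emptyset\neq B\subseteq N\setminus\{a\}\}$; $\eta_G\in\mathbb{R}^{\Upsilon}$ has $\eta_G(a|B)=1$ if $B=\mathrm{pa}_G(a)$, else $0$; $P_N=\mathrm{conv}\{\eta_G:G\in\mathrm{DAG}(N)\}$. A set $\mathcal{D}\subseteq\mathrm{DAG}(N)$ is called a facet of $P_N$ if $\mathrm{conv}\{\eta_G:G\in\mathcal{D}\}$ is a facet of $P_N$. *)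

(* Defs.v *)
From HB Require Import structures.
From mathcomp Require Import all_boot all_order all_algebra.
Set Implicit Arguments. Unset Strict Implicit. Unset Printing Implicit Defensive.
Import Order.TTheory GRing.Theory Num.Theory.
Local Open Scope ring_scope.

(* Directed graphs over the finite vertex set N: a set of arrows (x,y) = x -> y. *)
Definition graph (N : finType) := {set N * N}.

Definition arrow_rel (N : finType) (G : graph N) : rel N := fun x y => (x, y) \in G.

(* acyclic: no directed cycle, i.e. no x with an arrow x -> y and a directed
   path from y back to x (loops x -> x count as cycles) *)
Definition is_dag (N : finType) (G : graph N) : bool :=
  [forall x, forall y, ~~ (((x, y) \in G) && connect (arrow_rel G) y x)].

Definition DAG (N : finType) : {set graph N} := [set G | is_dag G].

Definition pa (N : finType) (G : graph N) (a : N) : {set N} := [set b | (b, a) \in G].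

Definition Upsilon (N : finType) :=
  {p : N * {set N} | (p.1 \notin p.2) && (p.2 != set0)}.

Definition vec (R : realFieldType) (N : finType) := {ffun Upsilon N -> R}.

Definition eta (R : realFieldType) (N : finType) (G : graph N) : vec R N :=
  [ffun u : Upsilon N => ((pa G (val u).1 == (val u).2) : nat)%:R].

Definition conv (R : realFieldType) (N : finType) (S : {set graph N}) (x : vec R N)
  : Prop :=
  exists w : graph N -> R,
    [/\ forall G, 0 <= w G, forall G, G \notin S -> w G = 0,
        \sum_(G : graph N) w G = 1 &
        forall u, x u = \sum_(G : graph N) w G * @eta R N G u].

Definition PN (R : realFieldType) (N : finType) : vec R N -> Prop := @conv R N (DAG N).

Definition dotv (R : realFieldType) (N : finType) (c x : vec R N) : R :=
  \sum_(u : Upsilon N) c u * x u.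

Definition face (R : realFieldType) (N : finType) (F P : vec R N -> Prop) : Prop :=
  exists (c : vec R N) (d : R),
    (forall x, P x -> dotv c x <= d) /\
    (forall x, F x <-> (P x /\ dotv c x = d)).

Definition aff_indep (R : realFieldType) (N : finType) (k : nat)
  (p : 'I_k.+1 -> vec R N) : Prop :=
  forall c : 'I_k.+1 -> R,
    \sum_i c i = 0 -> (forall u, \sum_i c i * p i u = 0) -> forall i, c i = 0.

Definition affdim_atleast (R : realFieldType) (N : finType) (F : vec R N -> Prop)
  (k : nat) : Prop :=
  exists p : 'I_k.+1 -> vec R N, (forall i, F (p i)) /\ aff_indep p.

Definition has_affdim (R : realFieldType) (N : finType) (F : vec R N -> Prop)
  (d : int) : Prop :=
  (d = -1 /\ forall x, ~ F x) \/
  (exists k : nat, d = k%:Z /\ affdim_atleast F k /\ ~ affdim_atleast F k.+1).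

Definition facet_of (R : realFieldType) (N : finType) (F P : vec R N -> Prop) : Prop :=
  face F P /\ exists d : int, has_affdim P d /\ has_affdim F (d - 1).

Definition is_facet (R : realFieldType) (N : finType) (D : {set graph N}) : Prop :=
  D \subset DAG N /\ facet_of (@conv R N D) (@PN R N).

(* Main.v *)
Require Import Defs.
From HB Require Import structures.
From mathcomp Require Import all_boot all_order all_algebra.
From mathcomp Require Import zify ring lra.
Import Order.TTheory GRing.Theory Num.Theory.
Set Implicit Arguments. Unset Strict Implicit. Unset Printing Implicit Defensive.
Open Scope ring_scope.

Lemma dag_noloop (N : finType) (G : graph N) x : is_dag G -> (x, x) \notin G.
Proof.
move=> /forallP /(_ x) /forallP /(_ x); rewrite connect0 andbT; exact.
Qed.

Lemma dag_sub (N : finType) (G H : graph N) : G \subset H -> is_dag H -> is_dag G.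
Proof.
move=> sGH /forallP hH; apply/forallP => x; apply/forallP => y.
have /forallP /(_ y) := hH x; apply: contra => /andP [xyG cyx].
rewrite (subsetP sGH _ xyG) /=.
apply: connect_sub cyx => u v uv; apply: connect1; exact: (subsetP sGH).
Qed.

Lemma etaE (R : realFieldType) (N : finType) (G : graph N) u :
  Defs.eta R G u = ((pa G (val u).1 == (val u).2) : nat)%:R.
Proof. by rewrite ffunE. Qed.

Lemma eta_in_conv (R : realFieldType) (N : finType) (S : {set graph N}) G :
  G \in S -> conv S (Defs.eta R G).
Proof.
move=> GS; exists (fun H => if H == G then 1 else 0); split.
- by move=> H; case: eqP.
- by move=> H HS; case: eqP => // e; rewrite e GS in HS.
- by rewrite -big_mkcond big_pred1_eq.
- move=> u; rewrite (bigD1 G) //= eqxx mul1r big1 ?addr0 // => H /negbTE ->.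
  by rewrite mul0r.
Qed.
Lemma eta01 (R : realFieldType) (N : finType) (G : graph N) u :
  0 <= Defs.eta R G u <= 1.
Proof. by rewrite etaE; case: eqP => _; rewrite ?lexx ?ler01. Qed.

Lemma pa_half (R : realFieldType) (N : finType) (G H : graph N) x :
  is_dag G -> (forall u, Defs.eta R G u = Defs.eta R H u) -> pa G x != set0 ->
  pa H x = pa G x.
Proof.
move=> dG e ne.
have h : (x \notin pa G x) && (pa G x != set0).
  by rewrite ne andbT inE; exact: dag_noloop.
have := e (exist _ (x, pa G x) h); rewrite !etaE /= eqxx.
by case: eqP => // _ /eqP; rewrite /= oner_eq0.
Qed.

Lemma eta_inj (R : realFieldType) (N : finType) (G H : graph N) :
  is_dag G -> is_dag H -> (forall u, Defs.eta R G u = Defs.eta R H u) -> G = H.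
Proof.
move=> dG dH e.
suff hp : forall x, pa G x = pa H x.
  apply/setP => -[y x]; have /setP /(_ y) := hp x; by rewrite !inE.
move=> x; case: (eqVneq (pa G x) set0) => hG.
  case: (eqVneq (pa H x) set0) => hH; first by rewrite hG hH.
  exact: (pa_half dH (fun u => esym (e u)) hH).
by apply/esym; apply: pa_half dG e hG.
Qed.

Lemma vertex (R : realFieldType) (N : finType) (D : {set graph N}) (H : graph N) :
  D \subset DAG N -> is_dag H -> conv D (Defs.eta R H) -> H \in D.
Proof.
move=> sD dH [w [w0 wD w1 we]].
case: (pickP (fun G => w G != 0)) => [G wG | none]; last first.
  have : \sum_G w G = 0 by rewrite big1 // => G _; apply/eqP/negbFE/none.
  by rewrite w1 => /eqP; rewrite oner_eq0.
have GD : G \in D by case: (boolP (G \in D)) => // /wD wG0; rewrite wG0 eqxx in wG.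
have wp : 0 < w G by rewrite lt_def wG w0.
have dG : is_dag G by move: (subsetP sD _ GD); rewrite inE.
suff GH : G = H by rewrite -GH.
apply: eta_inj => // u.
have := we u; rewrite (bigD1 G) //=.
have w1' := w1; rewrite (bigD1 G) //= in w1'.
have le1 : \sum_(G' | G' != G) w G' * Defs.eta R G' u <= \sum_(G' | G' != G) w G'.
  by apply: ler_sum => G' _; have /andP[_ e1] := eta01 R G' u; rewrite ler_piMr.
have ge0 : 0 <= \sum_(G' | G' != G) w G' * Defs.eta R G' u.
  by apply: sumr_ge0 => G' _; have /andP[e0 _] := eta01 R G' u; rewrite mulr_ge0.
rewrite !etaE; case: eqP => _; case: eqP => _ //= => hh; lra.
Qed.
Definition gsum (R : realFieldType) (N : finType) (c : vec R N) (a : N) (X : {set N}) : R :=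
  \sum_(u : Upsilon N | val u == (a, X)) c u.

Lemma score_split (R : realFieldType) (N : finType) (c : vec R N) (K : graph N) a :
  dotv c (Defs.eta R K) =
  \sum_(u | (val u).1 != a) c u * Defs.eta R K u + gsum c a (pa K a).
Proof.
rewrite /dotv (bigID (fun u : Upsilon N => (val u).1 != a)) /=; congr (_ + _).
rewrite /gsum big_mkcond [RHS]big_mkcond; apply: eq_bigr => u _ /=.
have -> : (val u == (a, pa K a)) = ((val u).1 == a) && ((val u).2 == pa K a).
  by case: (val u).
rewrite etaE /= negbK.
case: (eqVneq (val u).1 a) => [->|] //=; rewrite eq_sym.
by case: eqP; rewrite ?mulr1 ?mulr0.
Qed.

Lemma score_diff (R : realFieldType) (N : finType) (c : vec R N) (K K' : graph N) a :
  (forall x, x != a -> pa K x = pa K' x) ->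
  dotv c (Defs.eta R K') + gsum c a (pa K a) = dotv c (Defs.eta R K) + gsum c a (pa K' a).
Proof.
move=> hx; rewrite (score_split c K a) (score_split c K' a).
have -> : \sum_(u | (val u).1 != a) c u * Defs.eta R K' u =
          \sum_(u | (val u).1 != a) c u * Defs.eta R K u.
  by apply: eq_bigr => u hu; rewrite !etaE hx.
by rewrite -!addrA (addrC (gsum _ _ _)).
Qed.
Lemma aff_extend (R : realFieldType) (N : finType) (Q P : vec R N -> Prop)
  (c z e : vec R N) (d : R) (u : Upsilon N) (m : nat) :
  d != 0 -> (forall x, Q x -> P x /\ dotv c x = d /\ x u = 0) ->
  P z -> (forall v, z v = 0) -> P e -> e u = 1 ->
  affdim_atleast Q m -> affdim_atleast P m.+2.
Proof.
move=> d0 hQ Pz z0 Pe e1 [p [Qp ind]].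
pose p' := fun i : 'I_m.+3 => if (i < m.+1)%N then p (inord i)
   else if (i == m.+1 :> nat) then z else e.
exists p'; split.
  move=> i; rewrite /p'; case: ifP => _; first exact: (hQ _ (Qp _)).1.
  by case: ifP.
move=> c' hs hv.
pose c'' := fun i : 'I_m.+1 => c' (widen_ord (leqnSn _) (widen_ord (leqnSn _) i)).
have pw : forall i : 'I_m.+1, p' (widen_ord (leqnSn _) (widen_ord (leqnSn _) i)) = p i.
  by move=> i; rewrite /p' /= ltn_ord inord_val.
have pz : p' (widen_ord (leqnSn _) ord_max) = z by rewrite /p' /= ltnn eqxx.
have pe : p' ord_max = e.
  rewrite /p' /=; case: ifP => h; first by exfalso; lia.
  by case: ifP => h'; first by exfalso; lia.
have hs' : \sum_i c'' i + c' (widen_ord (leqnSn _) ord_max) + c' ord_max = 0.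
  by move: hs; rewrite big_ord_recr /= big_ord_recr.
have hv' : forall v, \sum_(i < m.+1) c'' i * p i v
    + c' (widen_ord (leqnSn _) ord_max) * z v + c' ord_max * e v = 0.
  move=> v; transitivity (\sum_i c' i * p' i v); last exact: hv v.
  rewrite [RHS]big_ord_recr /= [in RHS]big_ord_recr /= pz pe.
  by congr (_ + _ + _); apply: eq_bigr => i _; rewrite pw.
have pu : forall i, p i u = 0 by move=> i; exact: (hQ _ (Qp i)).2.2.
have c2 : c' ord_max = 0.
  have := hv' u; rewrite big1 ?z0 ?e1 => [|i _]; last by rewrite pu mulr0.
  move=> h; lra.
have hv'' : forall v, \sum_(i < m.+1) c'' i * p i v = 0.
  by move=> v; have := hv' v; rewrite z0 c2 mulr0 mul0r !addr0.
have A0 : \sum_i c'' i = 0.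
  have : \sum_v c v * (\sum_(i < m.+1) c'' i * p i v) = (\sum_i c'' i) * d.
    rewrite mulr_suml; under eq_bigr do rewrite mulr_sumr.
    rewrite exchange_big; apply: eq_bigr => i _.
    rewrite -(hQ _ (Qp i)).2.1 /dotv mulr_sumr; apply: eq_bigr => v _.
    by rewrite mulrCA.
  under eq_bigr do rewrite hv'' mulr0.
  rewrite big1 // => /esym /eqP; rewrite mulf_eq0 (negbTE d0) orbF => /eqP //.
have c1 : c' (widen_ord (leqnSn _) ord_max) = 0 by move: hs'; rewrite A0 c2; lra.
have ci := ind c'' A0 hv''.
move=> i; case: (ltnP i m.+1) => hi.
  have -> : i = widen_ord (leqnSn _) (widen_ord (leqnSn _) (Ordinal hi)) by apply: val_inj.
  exact: ci.
case: (ltnP i m.+2) => hi2.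
  have -> : i = widen_ord (leqnSn _) ord_max by apply: val_inj => /=; lia.
  exact: c1.
have -> : i = ord_max by apply: val_inj => /=; have := ltn_ord i; lia.
exact: c2.
Qed.

Lemma aff_two (R : realFieldType) (N : finType) (P : vec R N -> Prop)
  (z e : vec R N) (u : Upsilon N) :
  P z -> (forall v, z v = 0) -> P e -> e u = 1 -> affdim_atleast P 1.
Proof.
move=> Pz z0 Pe e1.
exists (fun i : 'I_2 => if val i == 0%N then z else e); split.
  by move=> i; case: ifP.
move=> c hs hv.
have := hv u; rewrite !big_ord_recr big_ord0 /= z0 e1 => h.
rewrite !big_ord_recr big_ord0 /= in hs.
move=> i; case: i => -[|[|k]] hk.
- have -> : Ordinal hk = widen_ord (leqnSn _) ord_max by apply: val_inj.
  lra.
- have -> : Ordinal hk = ord_max by apply: val_inj.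
  lra.
- by exfalso.
Qed.
Close Scope ring_scope.

Theorem corollary2 (R : realFieldType) (N : finType) (D : {set graph N}) :
  1 < #|N| ->
  @is_facet R N D ->
  (set0 : graph N) \notin D ->
  (forall G H : graph N, G \in D -> H \in DAG N -> G \subset H -> H \in D) /\
  (forall u : Upsilon N, exists2 G : graph N, G \in D & pa G (val u).1 = (val u).2).
Proof.
move=> _ [sD [[c [d [valid iff]]] [dP [hP hF]]]] n0.
have PNd : forall H, H \in DAG N -> PN (Defs.eta R H) by move=> H; exact: eta_in_conv.
have scD : forall G, G \in D -> dotv c (Defs.eta R G) = d.
  by move=> G GD; exact: ((iff _).1 (eta_in_conv R GD)).2.
have scle : forall G, G \in DAG N -> (dotv c (Defs.eta R G) <= d)%R.
  by move=> G GD; apply: valid; exact: PNd.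
have toD : forall H, H \in DAG N -> dotv c (Defs.eta R H) = d -> H \in D.
  move=> H dH e; apply: vertex sD _ _; first by move: dH; rewrite inE.
  by apply/iff; split => //; exact: PNd.
have dag0 : (set0 : graph N) \in DAG N.
  by rewrite inE; apply/forallP => x; apply/forallP => y; rewrite inE.
set z := Defs.eta R (set0 : graph N).
have z0 : forall v, z v = 0%R.
  move=> v; rewrite etaE; case: eqP => // e; exfalso.
  have /andP [_ /eqP] := valP v; apply; rewrite -e; apply/setP => y; by rewrite !inE.
have d0 : d != 0%R.
  apply/eqP => d0; move/negP: n0; apply.
  apply: toD => //; rewrite d0.
  by rewrite /dotv big1 // => v _; rewrite z0 mulr0.
have L : forall u : Upsilon N, exists2 G : graph N, G \in D & pa G (val u).1 = (val u).2.
  move=> u.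
  case: (boolP [exists G in D, pa G (val u).1 == (val u).2]) => [/exists_inP [G GD /eqP]| none].
    by exists G.
  exfalso.
  set a := (val u).1; set B := (val u).2.
  have /andP [aB Bn] : (a \notin B) && (B != set0) := valP u.
  set S := [set (b, a) | b in B].
  have paS : pa S a = B.
    apply/setP => y; rewrite inE; apply/imsetP/idP => [[b bB /(congr1 fst) /= ->] // | yB].
    by exists y.
  have dS : S \in DAG N.
    rewrite inE; apply/forallP => x; apply/forallP => y; apply/negP => /andP [].
    move=> /imsetP [b bB [-> ->]] /connectP [[|y' p] /= hp hx].
      by move: bB; rewrite hx (negbTE aB).
    move: hp => /andP [/imsetP [b' b'B [e _]] _].
    by move: b'B; rewrite -e (negbTE aB).
  have e1 : Defs.eta R S u = 1%R by rewrite etaE paS eqxx.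
  have hQ : forall x, conv D x -> PN x /\ dotv c x = d /\ x u = 0%R.
    move=> x Fx; have [Px dx] := (iff x).1 Fx; split => //; split => //.
    case: Fx => w [w0 wD w1 we]; rewrite we big1 // => G _.
    case: (boolP (G \in D)) => GD; last by rewrite wD // mul0r.
    rewrite etaE; case: eqP; rewrite ?mulr0 // => e.
    by move: none; rewrite negb_exists_in => /forall_inP /(_ G GD); rewrite e eqxx.
  case: hP => [[_ nP] | [k [ek [_ nk]]]]; first by apply: (nP z); exact: PNd.
  rewrite ek in hF.
  case: hF => [[hk _] | [m [hm [am _]]]].
    have k0 : k = 0 by lia.
    apply: nk; rewrite k0; apply: (aff_two (z := z) (e := Defs.eta R S) (u := u)) => //.
    - exact: PNd.
    - exact: PNd.
  have km : k = m.+2.-1 by lia.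
  apply: nk; rewrite km /=.
  apply: (aff_extend d0 hQ _ z0 _ e1 am); exact: PNd.
split => //.
have step : forall K H, K \in D -> H \in DAG N -> K \subset H -> forall b a,
    (b, a) \in H -> (b, a) \notin K -> ((b, a) |: K) \in D.
  move=> K H KD dH sKH b a baH baK.
  set K' := (b, a) |: K.
  have sK'H : K' \subset H by rewrite subUset sub1set baH.
  have dK' : K' \in DAG N by move: dH; rewrite !inE; exact: dag_sub.
  have dK : is_dag K by move: (subsetP sD _ KD); rewrite inE.
  have paK' : forall x, x != a -> pa K x = pa K' x.
    move=> x xa; apply/setP => y; rewrite !inE xpair_eqE.
    by rewrite (negbTE xa) andbF.
  have paK'a : pa K' a = b |: pa K a.
    by apply/setP => y; rewrite !inE xpair_eqE eqxx andbT.
  have bK : b \notin pa K a by rewrite inE.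
  have ba : b != a.
    apply/eqP => e; move: baH; rewrite e; apply/negP; apply: dag_noloop.
    by move: dH; rewrite inE.
  have h : (a \notin b |: pa K a) && (b |: pa K a != set0).
    rewrite !inE negb_or eq_sym ba /= (dag_noloop a dK) /=.
    by apply/set0Pn; exists b; rewrite !inE eqxx.
  have [G GD paG] := L (exist _ (a, b |: pa K a) h).
  rewrite /= in paG.
  set G0 := G :\ (b, a).
  have dG : G \in DAG N by exact: (subsetP sD).
  have dG0 : G0 \in DAG N by move: dG; rewrite !inE; apply: dag_sub; exact: subD1set.
  have paG0 : forall x, x != a -> pa G0 x = pa G x.
    move=> x xa; apply/setP => y; rewrite !inE xpair_eqE.
    by rewrite (negbTE xa) andbF.
  have paG0a : pa G0 a = pa K a.
    apply/setP => y; rewrite !inE xpair_eqE eqxx andbT.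
    move/setP/(_ y): (paG); rewrite !inE => ->.
    by case: eqP => [->|] //=; rewrite (negbTE baK).
  have e1 := @score_diff R N c G G0 a (fun x xa => esym (paG0 x xa)).
  have e2 := @score_diff R N c K K' a paK'.
  rewrite paG0a paG -paK'a in e1.
  rewrite (scD G GD) in e1; rewrite (scD K KD) in e2.
  have := scle _ dG0; have := scle _ dK'.
  move=> h1 h2.
  apply: toD => //.
  apply/eqP; rewrite eq_le h1 /=; lra.
move=> G H GD dH sGH.
suff hh : forall n K, #|H :\: K| <= n -> K \in D -> K \subset H -> H \in D.
  exact: (hh _ G (leqnn _) GD sGH).
elim=> [|n IH] K hK KD sKH.
  have : H :\: K = set0 by apply/eqP; rewrite -cards_eq0; lia.
  move/eqP; rewrite setD_eq0 => sHK.
  by have -> : H = K by apply/eqP; rewrite eqEsubset sHK sKH.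
case: (set_0Vmem (H :\: K)) => [e0 | [[b a] hba]].
  move/eqP: e0; rewrite setD_eq0 => sHK.
  by have -> : H = K by apply/eqP; rewrite eqEsubset sHK sKH.
move: (hba); rewrite inE => /andP [baK baH].
apply: (IH ((b, a) |: K)).
- have -> : H :\: ((b, a) |: K) = (H :\: K) :\ (b, a).
    by apply/setP => y; rewrite !inE; case: (y == (b, a)).
  have := cardsD1 (b, a) (H :\: K); rewrite hba add1n => e; by move: hK; rewrite e ltnS.
- exact: (step K H).
- by rewrite subUset sub1set baH.
Qed.
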